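(* Let $\mathbb X=\langle X,\rho\rangle$ be a countable structure with $\rho$ an equivalence relation whose classes are countably infinitely many singletons together with exactly one class of size $i$ for each $i\ge2$; and let $\mathbb Y=\langle Y,\sigma\rangle$ be a countable structure with $\sigma$ an equivalence relation whose classes are countably infinitely many singletons together with exactly one further class, which is countably infinite. Then $\mathbb X\equiv_{\mathcal P}\mathbb Y$, $\mathbb X\not\equiv_{\mathcal P_{\infty\omega}}\mathbb Y$, and $\mathbb X\not\equiv\mathbb Y$.
   Context: The language has one binary relation symbol $R$. $\equiv$ is first order elementary equivalence. $\mathcal P_0$ consists of all atomic formulas ($v_\alpha=v_\beta$, $R(v_\alpha,v_\beta)$) and all $\neg\,v_\alpha=v_\beta$; $\mathcal P$ is the closure of $\mathcal P_0$ under finite conjunctions, finite disjunctions, $\forall v$ and $\exists v$ (no negation), and $\mathcal P_{\infty\omega}$ is the closure of $\mathcal P_0$ under $\forall v$, $\exists v$ and conjunctions and disjunctions of arbitrary sets of formulas (no negation). For a class $\mathcal F$, $\mathbb X\equiv_{\mathcal F}\mathbb Y$ means $\mathbb X,\mathbb Y$ satisfy the same sentences of $\mathcal F$. *)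

(* Defs.v *)
From Stdlib Require Import List.
Import ListNotations.

Inductive fo : Type :=
| FEq  : nat -> nat -> fo
| FRel : nat -> nat -> fo
| FNot : fo -> fo
| FAnd : fo -> fo -> fo
| FOr  : fo -> fo -> fo
| FAll : nat -> fo -> fo
| FEx  : nat -> fo -> fo.

Definition upd {X : Type} (e : nat -> X) (n : nat) (a : X) : nat -> X :=
  fun m => if Nat.eqb m n then a else e m.

Fixpoint fo_free (k : nat) (f : fo) : Prop :=
  match f with
  | FEq n m | FRel n m => k = n \/ k = m
  | FNot g => fo_free k g
  | FAnd g h | FOr g h => fo_free k g \/ fo_free k h
  | FAll n g | FEx n g => k <> n /\ fo_free k g
  end.

Fixpoint fo_sat {X : Type} (R : X -> X -> Prop) (e : nat -> X) (f : fo) : Prop :=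
  match f with
  | FEq n m => e n = e m
  | FRel n m => R (e n) (e m)
  | FNot g => ~ fo_sat R e g
  | FAnd g h => fo_sat R e g /\ fo_sat R e h
  | FOr g h => fo_sat R e g \/ fo_sat R e h
  | FAll n g => forall a : X, fo_sat R (upd e n a) g
  | FEx n g => exists a : X, fo_sat R (upd e n a) g
  end.

Definition fo_sentence (f : fo) : Prop := forall k, ~ fo_free k f.

Definition fo_models {X : Type} (R : X -> X -> Prop) (f : fo) : Prop :=
  forall e : nat -> X, fo_sat R e f.

Definition elem_equiv {X Y : Type} (RX : X -> X -> Prop) (RY : Y -> Y -> Prop) : Prop :=
  forall f, fo_sentence f -> (fo_models RX f <-> fo_models RY f).

Inductive pos : Type :=
| PEq  : nat -> nat -> pos
| PRel : nat -> nat -> pos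
| PNeq : nat -> nat -> pos
| PAnd : pos -> pos -> pos
| POr  : pos -> pos -> pos
| PAll : nat -> pos -> pos
| PEx  : nat -> pos -> pos.

Fixpoint pos_free (k : nat) (f : pos) : Prop :=
  match f with
  | PEq n m | PRel n m | PNeq n m => k = n \/ k = m
  | PAnd g h | POr g h => pos_free k g \/ pos_free k h
  | PAll n g | PEx n g => k <> n /\ pos_free k g
  end.

Fixpoint pos_sat {X : Type} (R : X -> X -> Prop) (e : nat -> X) (f : pos) : Prop :=
  match f with
  | PEq n m => e n = e m
  | PRel n m => R (e n) (e m)
  | PNeq n m => e n <> e m
  | PAnd g h => pos_sat R e g /\ pos_sat R e h
  | POr g h => pos_sat R e g \/ pos_sat R e h
  | PAll n g => forall a : X, pos_sat R (upd e n a) g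
  | PEx n g => exists a : X, pos_sat R (upd e n a) g
  end.

Definition pos_sentence (f : pos) : Prop := forall k, ~ pos_free k f.

Definition pos_models {X : Type} (R : X -> X -> Prop) (f : pos) : Prop :=
  forall e : nat -> X, pos_sat R e f.

Definition pos_equiv {X Y : Type} (RX : X -> X -> Prop) (RY : Y -> Y -> Prop) : Prop :=
  forall f, pos_sentence f -> (pos_models RX f <-> pos_models RY f).

Inductive pinf : Type :=
| IEq  : nat -> nat -> pinf
| IRel : nat -> nat -> pinf
| INeq : nat -> nat -> pinf
| IAnd : forall I : Type, (I -> pinf) -> pinf
| IOr  : forall I : Type, (I -> pinf) -> pinf
| IAll : nat -> pinf -> pinf
| IEx  : nat -> pinf -> pinf.

Fixpoint pinf_free (k : nat) (f : pinf) : Prop :=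
  match f with
  | IEq n m | IRel n m | INeq n m => k = n \/ k = m
  | IAnd J g | IOr J g => exists i : J, pinf_free k (g i)
  | IAll n g | IEx n g => k <> n /\ pinf_free k g
  end.

Fixpoint pinf_sat {X : Type} (R : X -> X -> Prop) (e : nat -> X) (f : pinf) : Prop :=
  match f with
  | IEq n m => e n = e m
  | IRel n m => R (e n) (e m)
  | INeq n m => e n <> e m
  | IAnd J g => forall i : J, pinf_sat R e (g i)
  | IOr J g => exists i : J, pinf_sat R e (g i)
  | IAll n g => forall a : X, pinf_sat R (upd e n a) g
  | IEx n g => exists a : X, pinf_sat R (upd e n a) g
  end.

Definition pinf_sentence (f : pinf) : Prop := forall k, ~ pinf_free k f.

Definition pinf_models {X : Type} (R : X -> X -> Prop) (f : pinf) : Prop :=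
  forall e : nat -> X, pinf_sat R e f.

Definition pinf_equiv {X Y : Type} (RX : X -> X -> Prop) (RY : Y -> Y -> Prop) : Prop :=
  forall f, pinf_sentence f -> (pinf_models RX f <-> pinf_models RY f).

Definition countable (X : Type) : Prop :=
  exists f : X -> nat, forall a b, f a = f b -> a = b.

Definition equivalence_rel {X : Type} (R : X -> X -> Prop) : Prop :=
  (forall x, R x x) /\ (forall x y, R x y -> R y x) /\
  (forall x y z, R x y -> R y z -> R x z).

Definition class_size {X : Type} (R : X -> X -> Prop) (x : X) (n : nat) : Prop :=
  exists l : list X, NoDup l /\ length l = n /\ (forall y, R x y <-> In y l).

Definition class_infinite {X : Type} (R : X -> X -> Prop) (x : X) : Prop :=
  forall l : list X, exists y, R x y /\ ~ In y l.

Definition inf_many_singletons {X : Type} (R : X -> X -> Prop) : Prop :=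
  forall l : list X, exists x, class_size R x 1 /\ ~ In x l.

Definition is_X_structure (X : Type) (R : X -> X -> Prop) : Prop :=
  countable X /\ equivalence_rel R /\
  inf_many_singletons R /\
  (forall i, 2 <= i -> exists x, class_size R x i) /\
  (forall i x y, 2 <= i -> class_size R x i -> class_size R y i -> R x y) /\
  (forall x, exists n, class_size R x n).

Definition is_Y_structure (Y : Type) (S : Y -> Y -> Prop) : Prop :=
  countable Y /\ equivalence_rel S /\
  inf_many_singletons S /\
  exists y0, class_infinite S y0 /\ (forall y, S y y0 \/ class_size S y 1).

(* Main.v *)
Require Import Defs.
From Stdlib Require Import List Lia Arith Classical.
Import ListNotations.

Definition Inv {A B} (P : A -> Prop) (Q : B -> Prop) (V : list nat) (e : nat -> A) (e' : nat -> B) : Prop :=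
  (forall v w, In v V -> In w V -> (e v = e w <-> e' v = e' w)) /\
  (forall v, In v V -> (P (e v) <-> Q (e' v))).

Definition InvEx {A B} (P : A -> Prop) (Q : B -> Prop) (V : list nat) (n : nat) (e : nat -> A) (e' : nat -> B) : Prop :=
  (forall v w, In v V -> In w V -> v <> n -> w <> n -> (e v = e w <-> e' v = e' w)) /\
  (forall v, In v V -> v <> n -> (P (e v) <-> Q (e' v))).

Lemma Inv_InvEx {A B} P Q V n (e : nat -> A) (e' : nat -> B) : Inv P Q V e e' -> InvEx P Q V n e e'.
Proof. intros [H1 H2]; split; auto. Qed.

Lemma InvEx_swap {A B} P Q V n (e : nat -> A) (e' : nat -> B) : InvEx P Q V n e e' -> InvEx Q P V n e' e.
Proof. intros [H1 H2]; split; intros; apply iff_sym; auto. Qed.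

Lemma Inv_swap {A B} P Q V (e : nat -> A) (e' : nat -> B) : Inv P Q V e e' -> Inv Q P V e' e.
Proof. intros [H1 H2]; split; intros; apply iff_sym; auto. Qed.

Lemma step_f {A B} (P : A -> Prop) (Q : B -> Prop) K
  (Hf : forall a (l : list B), length l <= K -> exists b, (P a <-> Q b) /\ ~ In b l)
  V n e e' a : length V <= K -> InvEx P Q V n e e' -> exists b, Inv P Q V (upd e n a) (upd e' n b).
Proof.
  intros HK [H1 H2].
  destruct (classic (exists w, In w V /\ w <> n /\ e w = a)) as [[w [Hw [Hwn Hea]]] | Hno].
  - exists (e' w). split.
    + intros v u Hv Hu. unfold upd.
      destruct (Nat.eqb_spec v n) as [Hvn|Hvn]; destruct (Nat.eqb_spec u n) as [Hun|Hun].
      * split; auto.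
      * subst a. apply H1; auto.
      * subst a. apply H1; auto.
      * apply H1; auto.
    + intros v Hv. unfold upd. destruct (Nat.eqb_spec v n).
      * subst a. apply H2; auto.
      * apply H2; auto.
  - destruct (Hf a (map e' V)) as [b [HPQ Hb]]. { rewrite length_map; auto. }
    exists b. split.
    + intros v u Hv Hu. unfold upd.
      destruct (Nat.eqb_spec v n) as [Hvn|Hvn]; destruct (Nat.eqb_spec u n) as [Hun|Hun].
      * split; auto.
      * split; intro Heq; exfalso.
        -- apply Hno. exists u. split; [auto|split; [auto|symmetry; auto]].
        -- apply Hb. rewrite Heq. apply in_map. auto.
      * split; intro Heq; exfalso.
        -- apply Hno. exists v. auto.
        -- apply Hb. rewrite <- Heq. apply in_map; auto.
      * apply H1; auto.
    + intros v Hv. unfold upd. destruct (Nat.eqb_spec v n); auto.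
Qed.

Lemma step_b {A B} (P : A -> Prop) (Q : B -> Prop) K
  (Hb : forall b (l : list A), length l <= K -> exists a, (P a <-> Q b) /\ ~ In a l)
  V n e e' b : length V <= K -> InvEx P Q V n e e' -> exists a, Inv P Q V (upd e n a) (upd e' n b).
Proof.
  intros HK HI.
  assert (Hf' : forall b (l : list A), length l <= K -> exists a, (Q b <-> P a) /\ ~ In a l).
  { intros b0 l Hl. destruct (Hb b0 l Hl) as [a [H1 H2]]. exists a; split; [apply iff_sym|]; auto. }
  destruct (step_f Q P K Hf' V n e' e b HK (InvEx_swap _ _ _ _ _ _ HI)) as [a Ha].
  exists a. apply Inv_swap. exact Ha.
Qed.

Fixpoint pvars (f : pos) : list nat :=
  match f with
  | PEq n m | PRel n m | PNeq n m => [n; m]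
  | PAnd g h | POr g h => pvars g ++ pvars h
  | PAll n g | PEx n g => n :: pvars g
  end.

Lemma transfer {A B} (RA : A -> A -> Prop) (RB : B -> B -> Prop) P Q K
 (HR : forall x y x' y', (x = y <-> x' = y') -> (P x <-> Q x') -> (P y <-> Q y') -> RA x y -> RB x' y')
 (Hf : forall a (l : list B), length l <= K -> exists b, (P a <-> Q b) /\ ~ In b l)
 (Hb : forall b (l : list A), length l <= K -> exists a, (P a <-> Q b) /\ ~ In a l) :
 forall f V e e', incl (pvars f) V -> length V <= K -> Inv P Q V e e' ->
   pos_sat RA e f -> pos_sat RB e' f.
Proof.
  induction f as [n m|n m|n m|f1 IH1 f2 IH2|f1 IH1 f2 IH2|n f IH|n f IH];
    simpl; intros V e e' Hinc HK HI Hs.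
  - apply (proj1 HI n m); [apply Hinc; simpl; auto | apply Hinc; simpl; auto | exact Hs].
  - assert (Hn : In n V) by (apply Hinc; simpl; auto).
    assert (Hm : In m V) by (apply Hinc; simpl; auto).
    apply (HR (e n) (e m)); auto; [apply (proj1 HI) | apply (proj2 HI) | apply (proj2 HI)]; auto.
  - assert (Hn : In n V) by (apply Hinc; simpl; auto).
    assert (Hm : In m V) by (apply Hinc; simpl; auto).
    intro Heq; apply Hs; apply (proj1 HI n m Hn Hm); exact Heq.
  - destruct Hs as [H1 H2]; split; [eapply IH1|eapply IH2]; eauto;
      intros x Hx; apply Hinc; apply in_or_app; auto.
  - destruct Hs as [H1|H2]; [left; eapply IH1|right; eapply IH2]; eauto;
      intros x Hx; apply Hinc; apply in_or_app; auto.
  - intro b. destruct (step_b P Q K Hb V n e e' b HK (Inv_InvEx _ _ _ _ _ _ HI)) as [a Ha].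
    apply (IH V (upd e n a) (upd e' n b)); auto.
    intros x Hx; apply Hinc; simpl; auto.
  - destruct Hs as [a Ha].
    destruct (step_f P Q K Hf V n e e' a HK (Inv_InvEx _ _ _ _ _ _ HI)) as [b Hb'].
    exists b. apply (IH V (upd e n a) (upd e' n b)); auto.
    intros x Hx; apply Hinc; simpl; auto.
Qed.

Lemma upd_same {X} (e : nat -> X) v u : upd e v (e v) u = e u.
Proof. unfold upd; destruct (Nat.eqb_spec u v); subst; auto. Qed.

Lemma init {A B} (P : A -> Prop) (Q : B -> Prop) K
  (Hb : forall b (l : list A), length l <= K -> exists a, (P a <-> Q b) /\ ~ In a l) :
  forall V (e' : nat -> B), length V <= K -> exists e : nat -> A, Inv P Q V e e'.
Proof.
  induction V as [|v V IH]; intros e' HK.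
  - destruct (Hb (e' 0) nil (Nat.le_0_l K)) as [a _].
    exists (fun _ => a). split; simpl; tauto.
  - destruct (IH e') as [e He]; [simpl in HK; lia|].
    assert (HX : InvEx P Q (v::V) v e e').
    { destruct He as [H1 H2]; split.
      - intros u w Hu Hw Hun Hwn. destruct Hu; [congruence|]. destruct Hw; [congruence|]. auto.
      - intros u Hu Hun. destruct Hu; [congruence|]; auto. }
    destruct (step_b P Q K Hb (v::V) v e e' (e' v) HK HX) as [a Ha].
    exists (upd e v a).
    destruct Ha as [H1 H2]; split.
    + intros u w Hu Hw. rewrite <- (upd_same e' v u), <- (upd_same e' v w). auto.
    + intros u Hu. rewrite <- (upd_same e' v u). auto.
Qed.

Lemma gen_models {A B} RA RB (P : A -> Prop) (Q : B -> Prop) f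
 (HR : forall x y x' y', (x = y <-> x' = y') -> (P x <-> Q x') -> (P y <-> Q y') -> RA x y -> RB x' y')
 (Hf : forall a (l : list B), length l <= length (pvars f) -> exists b, (P a <-> Q b) /\ ~ In b l)
 (Hb : forall b (l : list A), length l <= length (pvars f) -> exists a, (P a <-> Q b) /\ ~ In a l) :
 pos_models RA f -> pos_models RB f.
Proof.
  intros H e'. destruct (init P Q _ Hb (pvars f) e' (le_n _)) as [e He].
  apply (transfer RA RB P Q _ HR Hf Hb f (pvars f) e e'); auto. apply incl_refl.
Qed.

Lemma single_eq {X} (R : X -> X -> Prop) x y :
  (forall z, R z z) -> class_size R x 1 -> R x y -> y = x.
Proof.
  intros Hr [l [Hnd [Hl Hiff]]] Hxy. destruct l as [|z [|z' l]]; simpl in Hl; try lia.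
  assert (H1 := proj1 (Hiff x) (Hr x)). assert (H2 := proj1 (Hiff y) Hxy).
  simpl in H1, H2. destruct H1 as [H1|[]]; destruct H2 as [H2|[]]; congruence.
Qed.

Lemma fresh_in {T} (l L : list T) : NoDup l -> length L < length l -> exists x, In x l /\ ~ In x L.
Proof.
  intros Hnd Hlt. apply NNPP; intro H.
  assert (Hi : incl l L).
  { intros x Hx. apply NNPP; intro Hn. apply H; eauto. }
  pose proof (NoDup_incl_length Hnd Hi). lia.
Qed.

Lemma notB {Y} (sigma : Y -> Y -> Prop) y0 b :
  (forall z, sigma z z) -> (forall x y, sigma x y -> sigma y x) ->
  (forall x y z, sigma x y -> sigma y z -> sigma x z) ->
  class_infinite sigma y0 -> class_size sigma b 1 -> ~ sigma y0 b.
Proof.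
  intros Hr Hs Ht Hinf Hb Hyb. destruct (Hinf [b]) as [z [Hz Hnz]].
  assert (Hbz : sigma b z) by (apply Ht with y0; auto).
  pose proof (single_eq sigma b z Hr Hb Hbz). apply Hnz; subst; simpl; auto.
Qed.

Definition thetaFO : fo :=
  FEx 0 (FEx 1 (FAnd (FNot (FEq 0 1)) (FAnd (FRel 0 1)
    (FAll 2 (FOr (FNot (FRel 0 2)) (FOr (FEq 2 0) (FEq 2 1))))))).

Definition stepf (k : nat) : pinf :=
  IAnd nat (fun i => if Nat.eqb i 0 then IRel 0 (S k)
                     else if Nat.leb i k then INeq (S k) i else IEq 0 0).

Fixpoint chain (k n : nat) : pinf :=
  match n with
  | 0 => IEq 0 0
  | S n' => IEx (S k) (IAnd bool (fun b => if b then stepf k else chain (S k) n'))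
  end.

Definition thetaInf : pinf := IEx 0 (IAnd nat (fun n => chain 0 n)).

Lemma chain_free : forall n k j, pinf_free j (chain k n) -> j <= k.
Proof.
  induction n; intros k j H; simpl in H.
  - lia.
  - destruct H as [Hne [b Hb]]. destruct b.
    + unfold stepf in Hb. simpl in Hb. destruct Hb as [i Hi].
      destruct (Nat.eqb_spec i 0); [simpl in Hi; lia|].
      destruct (Nat.leb_spec0 i k); simpl in Hi; lia.
    + apply IHn in Hb. lia.
Qed.

Lemma Ysat {Y} (sigma : Y -> Y -> Prop) y0
  (sS : forall x y, sigma x y -> sigma y x)
  (sT : forall x y z, sigma x y -> sigma y z -> sigma x z)
  (Binf : class_infinite sigma y0) :
  forall n k (e : nat -> Y), sigma y0 (e 0) -> pinf_sat sigma e (chain k n).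
Proof.
  induction n; intros k e H0; simpl.
  - reflexivity.
  - destruct (Binf (map e (seq 1 k))) as [a [Ha Hal]]. exists a. intros b; destruct b.
    + unfold stepf; simpl. intros i. destruct (Nat.eqb_spec i 0).
      * simpl. unfold upd. rewrite Nat.eqb_refl. simpl. apply sT with y0; auto.
      * destruct (Nat.leb_spec0 i k).
        -- simpl. unfold upd. rewrite Nat.eqb_refl. destruct (Nat.eqb_spec i (S k)); [lia|].
           intro E; apply Hal. rewrite E. apply in_map. apply in_seq. lia.
        -- simpl. reflexivity.
    + apply IHn. unfold upd. simpl. exact H0.
Qed.

Lemma Xchain {X} (rho : X -> X -> Prop) :
  forall n k (e : nat -> X), pinf_sat rho e (chain k n) ->
  exists l, NoDup l /\ length l = n /\
    forall y, In y l -> rho (e 0) y /\ forall i, 1 <= i <= k -> y <> e i.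
Proof.
  induction n; intros k e H; simpl in H.
  - exists nil. split; [constructor|split; [reflexivity| intros y []]].
  - destruct H as [a Ha]. pose proof (Ha true) as Hs. pose proof (Ha false) as Hc.
    simpl in Hs, Hc. destruct (IHn (S k) _ Hc) as [l [Hnd [Hl Hy]]].
    unfold stepf in Hs; simpl in Hs.
    assert (R0 : rho (e 0) a).
    { specialize (Hs 0). simpl in Hs. unfold upd in Hs. rewrite Nat.eqb_refl in Hs.
      simpl in Hs. exact Hs. }
    assert (Rne : forall i, 1 <= i <= k -> a <> e i).
    { intros i Hi. specialize (Hs i). destruct (Nat.eqb_spec i 0); [lia|].
      destruct (Nat.leb_spec0 i k); [|lia]. simpl in Hs. unfold upd in Hs.
      rewrite Nat.eqb_refl in Hs. destruct (Nat.eqb_spec i (S k)); [lia|]. exact Hs. }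
    exists (a :: l). split; [|split].
    + constructor; auto. intro Hin. destruct (Hy a Hin) as [_ Hn].
      apply (Hn (S k)); [lia|]. unfold upd; rewrite Nat.eqb_refl; reflexivity.
    + simpl; lia.
    + intros y [Ey|Hin].
      * subst y. split; auto.
      * destruct (Hy y Hin) as [Hr Hn]. split.
        -- unfold upd in Hr. simpl in Hr. exact Hr.
        -- intros i Hi. specialize (Hn i ltac:(lia)). unfold upd in Hn.
           destruct (Nat.eqb_spec i (S k)); [lia|]. exact Hn.
Qed.

Theorem mainTheorem18 (X : Type) (rho : X -> X -> Prop)
  (Y : Type) (sigma : Y -> Y -> Prop) :
  is_X_structure X rho -> is_Y_structure Y sigma ->
  pos_equiv rho sigma /\ ~ pinf_equiv rho sigma /\ ~ elem_equiv rho sigma.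
Proof.
  intros HX HY.
  destruct HX as [_ [[rR [rS rT]] [infX [sizeX [_ finX]]]]].
  destruct HY as [_ [[sR [sS sT]] [infY [y0 [Binf Ycl]]]]].
  split; [|split].
  - intros f _. split.
    + apply (gen_models rho sigma (fun a => exists y, rho a y /\ y <> a) (fun b => sigma y0 b)).
      * intros x y x' y' Heq HPx HPy Hr. destruct (classic (x = y)) as [E|E].
        -- assert (x' = y') by (apply Heq; auto). subst; apply sR.
        -- assert (Qx : sigma y0 x') by (apply HPx; exists y; auto).
           assert (Qy : sigma y0 y') by (apply HPy; exists x; split; auto).
           apply sT with y0; auto.
      * intros a l _. destruct (classic (exists y, rho a y /\ y <> a)) as [Pa|Pa].
        -- destruct (Binf l) as [b [Hb Hbl]]. exists b; split; [split; intros; auto|auto].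
        -- destruct (infY l) as [b [Hb Hbl]]. exists b. split; auto.
           split; intro H; [contradiction|exfalso; exact (notB sigma y0 b sR sS sT Binf Hb H)].
      * intros b l Hl. destruct (classic (sigma y0 b)) as [Qb|Qb].
        -- destruct (sizeX (length (pvars f) + 2)) as [c [L [Hnd [HL Hiff]]]]; [lia|].
           destruct (fresh_in L l Hnd) as [a [HaL Hal]]; [lia|].
           destruct (fresh_in L [a] Hnd) as [y [HyL Hya]]; [simpl; lia|].
           exists a. split; [|auto]. split; intro; auto. exists y. split.
           ++ apply rT with c; [apply rS; apply Hiff; auto | apply Hiff; auto].
           ++ intro E; apply Hya; subst; simpl; auto.
        -- destruct (infX l) as [a [Ha Hal]]. exists a. split; [|auto]. split; intro H.
           ++ destruct H as [y [Hy Hya]]. exfalso; apply Hya. apply (single_eq rho a y rR Ha Hy).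
           ++ contradiction.
    + destruct (sizeX (length (pvars f) + 2)) as [c0 [L0 [Hnd0 [HL0 Hiff0]]]]; [lia|].
      apply (gen_models sigma rho (fun b => sigma y0 b) (fun a => rho c0 a)).
      * intros x y x' y' Heq HPx HPy Hs. destruct (classic (x = y)) as [E|E].
        -- assert (x' = y') by (apply Heq; auto). subst; apply rR.
        -- assert (inB : forall u v, sigma u v -> u <> v -> sigma y0 u).
           { intros u v Huv Hne. destruct (Ycl u) as [H|H]. apply sS; auto.
             exfalso. apply Hne. symmetry. apply (single_eq sigma u v sR H Huv). }
           assert (Qx : rho c0 x') by (apply HPx; apply (inB x y Hs E)).
           assert (Qy : rho c0 y') by (apply HPy; apply (inB y x (sS _ _ Hs)); intro h; apply E; auto).
           apply rT with c0; auto.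
      * intros a l Hl. destruct (classic (sigma y0 a)) as [Pa|Pa].
        -- destruct (fresh_in L0 l Hnd0) as [x [HxL Hxl]]; [lia|].
           exists x; split; [split; intros; auto; apply Hiff0; auto | auto].
        -- destruct (infX (l ++ L0)) as [x [Hx Hxl]]. exists x. split.
           ++ split; intro H'; [contradiction|]. exfalso; apply Hxl; apply in_or_app; right; apply Hiff0; auto.
           ++ intro; apply Hxl; apply in_or_app; left; auto.
      * intros b l Hl. destruct (classic (rho c0 b)) as [Qb|Qb].
        -- destruct (Binf l) as [y [Hy Hyl]]. exists y. split; [split; auto|auto].
        -- destruct (infY l) as [y [Hy Hyl]]. exists y. split; [|auto].
           split; intro H'; [exfalso; exact (notB sigma y0 y sR sS sT Binf Hy H') | contradiction].
  - intro H.
    assert (Hsent : pinf_sentence thetaInf).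
    { intros j Hj. simpl in Hj. destruct Hj as [Hne [n Hn]]. apply chain_free in Hn. lia. }
    assert (HYm : pinf_models sigma thetaInf).
    { intro e. simpl. exists y0. intro n. apply (Ysat sigma y0 sS sT Binf). unfold upd; simpl. apply sR. }
    apply (proj2 (H thetaInf Hsent)) in HYm.
    destruct (infX nil) as [c _]. specialize (HYm (fun _ => c)). simpl in HYm.
    destruct HYm as [x Hx]. destruct (finX x) as [N [L [Hnd [HL Hiff]]]].
    destruct (Xchain rho (S N) 0 _ (Hx (S N))) as [l [Hnd' [Hl Hy]]].
    assert (Hi : incl l L).
    { intros y Hin. apply Hiff. destruct (Hy y Hin) as [Hr _]. unfold upd in Hr; simpl in Hr. exact Hr. }
    pose proof (NoDup_incl_length Hnd' Hi). lia.
  - intro H.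
    assert (Hsent : fo_sentence thetaFO).
    { intros k Hk. simpl in Hk. lia. }
    assert (HXm : fo_models rho thetaFO).
    { intro e. destruct (sizeX 2) as [c [L [Hnd [HL Hiff]]]]; [lia|].
      destruct L as [|p [|q [|]]]; simpl in HL; try lia.
      assert (Hpq : p <> q). { inversion Hnd; subst. intro E; subst. simpl in *. tauto. }
      assert (Hcp : rho c p) by (apply Hiff; simpl; auto).
      assert (Hcq : rho c q) by (apply Hiff; simpl; auto).
      simpl. exists p. exists q. unfold upd; simpl. split; [auto|split].
      - apply rT with c; auto.
      - intros a. destruct (classic (rho p a)) as [Hpa|Hpa]; [right|left; auto].
        assert (Hca : rho c a) by (apply rT with p; auto).
        apply Hiff in Hca. simpl in Hca. destruct Hca as [E|[E|[]]]; auto. }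
    apply (proj1 (H thetaFO Hsent)) in HXm.
    specialize (HXm (fun _ => y0)). simpl in HXm.
    destruct HXm as [x [y [Hne [Hxy Hall]]]]. unfold upd in *; simpl in *.
    destruct (Ycl x) as [Hx|Hx].
    + destruct (Binf [x; y]) as [z [Hz Hzn]]. destruct (Hall z) as [H1|[H1|H1]].
      * apply H1. apply sT with y0; auto.
      * apply Hzn; subst; simpl; auto.
      * apply Hzn; subst; simpl; auto.
    + apply Hne. symmetry. apply (single_eq sigma x y sR Hx Hxy).
Qed.
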